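(* Let $(\mathcal X,\mathcal A)$ be a measurable space, $G$ a probability measure on it, $q>2$, and $\mu_2,\mu_q:\mathcal X\to[0,\infty)$ measurable functions with $\mu_2$ bounded away from zero and $\mu_q$ bounded (away from infinity). For each $n$ let $K_n:\mathcal X\times\mathcal X\to\mathbb R$ be measurable, let $k_n=\iint K_n^2(x,y)\mu_2(x)\mu_2(y)\,d(G\times G)(x,y)$, and assume $\sup_{x,y}|K_n(x,y)|\le Ck_n$ for a constant $C$ independent of $n$. Let $\mathcal X=\bigcup_m\mathcal X_{n,m}$ be finite measurable partitions. If $\max_m G(\mathcal X_{n,m})\,k_n/n\to0$, then $$\frac1{k_n^{q/2}}\max_m\Big(\frac{G(\mathcal X_{n,m})}{n}\Big)^{q/2-1}\sum_m\int_{\mathcal X_{n,m}}\int_{\mathcal X_{n,m}}|K_n(x,y)|^q\mu_q(x)\mu_q(y)\,d(G\times G)(x,y)\to0 .$$ *)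

(* Defs.v *)
From HB Require Import structures.
From mathcomp Require Import all_boot all_order all_algebra.
From mathcomp Require Import all_classical all_reals all_analysis.
Set Implicit Arguments. Unset Strict Implicit. Unset Printing Implicit Defensive.
Import Order.TTheory GRing.Theory Num.Theory.
Import numFieldNormedType.Exports.
Local Open Scope classical_set_scope.
Local Open Scope ring_scope.

Definition kn d (T : measurableType d) (R : realType)
  (G : probability T R) (mu2 : T -> R) (Kn : T -> T -> R) : \bar R :=
  (\int[(G \x G)%E]_(z in setT) (Kn z.1 z.2 ^+ 2 * mu2 z.1 * mu2 z.2)%:E)%E.

Definition finite_meas_partition d (T : measurableType d) (N : nat)
  (P : nat -> set T) : Prop :=
  (forall m, (m < N)%N -> measurable (P m)) /\
  (forall m m', (m < N)%N -> (m' < N)%N -> m <> m' -> P m `&` P m' = set0) /\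
  (\bigcup_(m in [set m | (m < N)%N]) P m = setT).

(* Main.v *)
Require Import Defs.
From HB Require Import structures.
From mathcomp Require Import all_boot all_order all_algebra.
From mathcomp Require Import all_classical all_reals all_analysis measurable_realfun.
From mathcomp Require Import ring lra.
Import Order.TTheory GRing.Theory Num.Theory.
Import numFieldNormedType.Exports.
Local Open Scope classical_set_scope.
Local Open Scope ring_scope.

Lemma sum_part_le d (U : measurableType d) (R : realType)
  (mu : {measure set U -> \bar R}) (N : nat) (A : nat -> set U) (h : U -> \bar R) :
  (forall m, (m < N)%N -> measurable (A m)) ->
  (forall m m', (m < N)%N -> (m' < N)%N -> m <> m' -> A m `&` A m' = set0) ->
  (measurable_fun setT h)%E -> (forall x, (0 <= h x)%E) ->
  (\sum_(m < N) \int[mu]_(x in A m) h x <= \int[mu]_(x in setT) h x)%E.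
Proof.
move=> mA dA mh h0.
have mF : forall i : 'I_N, measurable (A i) by move=> i; exact: mA.
rewrite -(@ge0_integral_bigsetU _ _ _ mu _ (fun i : 'I_N => A i) h (index_enum 'I_N) mF).
- apply: ge0_subset_integral => //.
  exact: bigsetU_measurable.
- exact: index_enum_uniq.
- move=> i j _ _ [x [xi xj]]; apply/val_inj/eqP; apply/negPn/negP => /eqP ij.
  have := dA _ _ (ltn_ord i) (ltn_ord j) ij.
  by move/(congr1 (fun S => S x)); rewrite /= => <-.
- exact: measurable_funS mh.
- by move=> x _.
Qed.

Lemma powR_seq_cvg0 (R : realType) (u : nat -> R) (p : R) :
  0 < p -> (forall n, 0 <= u n) -> u @ \oo --> 0 ->
  (fun n => u n `^ p) @ \oo --> 0.
Proof.
move=> p0 u0 /cvgrPdist_le hu; apply/cvgrPdist_le => e e0.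
have := hu (e `^ p^-1) (powR_gt0 _ e0).
apply: filterS => n; rewrite !sub0r !normrN !ger0_norm ?powR_ge0 // => h.
have := @ge0_ler_powR _ p (ltW p0) (u n) (e `^ p^-1).
rewrite -powRrM mulVf ?gt_eqF // powRr1 ?(ltW e0) //; apply; rewrite ?nnegrE ?powR_ge0 //.
Qed.

Lemma pt_bound (R : realType) (q c M C k a m1 m2 n1 n2 : R) :
  2 < q -> 0 < c -> c <= n1 -> c <= n2 -> 0 <= m1 -> 0 <= m2 ->
  m1 <= M -> m2 <= M -> 0 <= k -> `|a| <= C * k ->
  `|a| `^ q * m1 * m2 <=
    ((`|C| * k) `^ (q - 2) * (M / c) ^+ 2) * (a ^+ 2 * n1 * n2).
Proof.
move=> q2 c0 cn1 cn2 m10 m20 m1M m2M k0 aCk.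
have M0 : 0 <= M by exact: le_trans m1M.
have hq : `|a| `^ q = `|a| `^ (q - 2) * a ^+ 2.
  rewrite -real_normK ?num_real // -(@powR_mulrn _ `|a| 2) // -powRD; first by congr (_ `^ _); ring.
  by rewrite subrK gt_eqF ?implybT // (lt_trans _ q2).
have hm : forall m n, 0 <= m -> m <= M -> c <= n -> m <= M / c * n.
  move=> m n m0 mM cn; apply: (le_trans mM).
  rewrite mulrAC ler_pdivlMr // ler_wpM2l //.
have h1 : `|a| `^ (q - 2) <= (`|C| * k) `^ (q - 2).
  apply: ge0_ler_powR; rewrite ?nnegrE ?mulr_ge0 //; first lra.
  by apply: (le_trans aCk); rewrite ler_wpM2r // ler_norm.
rewrite hq.
have -> : (`|C| * k) `^ (q - 2) * (M / c) ^+ 2 * (a ^+ 2 * n1 * n2) =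
   (`|C| * k) `^ (q - 2) * a ^+ 2 * (M / c * n1) * (M / c * n2) by ring.
apply: ler_pM; rewrite ?hm //.
  by apply/mulr_ge0 => //; apply/mulr_ge0; [exact: powR_ge0|exact: sqr_ge0].
apply: ler_pM; rewrite ?hm //.
  by apply/mulr_ge0; [exact: powR_ge0|exact: sqr_ge0].
by rewrite ler_wpM2r // sqr_ge0.
Qed.

Lemma alg_id (R : realType) (q k g C M c : R) : 2 < q -> 0 < k -> 0 <= g -> 0 < c ->
  ((k `^ (q / 2))^-1 * g `^ (q / 2 - 1)) * (((`|C| * k) `^ (q - 2) * (M / c) ^+ 2) * k)
  = (`|C| `^ (q - 2) * (M / c) ^+ 2) * (g * k) `^ (q / 2 - 1).
Proof.
move=> q2 k0 g0 c0.
have E1 : k `^ (q - 2) * k = k `^ (q / 2) * k `^ (q / 2 - 1).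
  rewrite -{2}(powRr1 (ltW k0)) -!powRD; first by congr (_ `^ _); field.
  - by rewrite (gt_eqF k0) implybT.
  - by rewrite (gt_eqF k0) implybT.
have kq : k `^ (q / 2) != 0 by rewrite gt_eqF // powR_gt0.
rewrite powRM ?normr_ge0 ?(ltW k0) // powRM ?(ltW k0) //.
transitivity ((k `^ (q / 2))^-1 * g `^ (q / 2 - 1) * `|C| `^ (q - 2) * (M / c) ^+ 2
   * (k `^ (q - 2) * k)); first by ring.
by rewrite E1; field; rewrite kq gt_eqF.
Qed.

Theorem lemma1 (d : measure_display) (T : measurableType d) (R : realType)
  (G : probability T R) (q : R) (mu2 muq : T -> R)
  (K : nat -> T -> T -> R) (C : R)
  (N : nat -> nat) (X : nat -> nat -> set T) :
  2 < q ->
  measurable_fun setT mu2 -> (forall x, 0 <= mu2 x) ->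
  (exists c : R, 0 < c /\ forall x, c <= mu2 x) ->
  measurable_fun setT muq -> (forall x, 0 <= muq x) ->
  (exists M : R, forall x, muq x <= M) ->
  (forall n, measurable_fun setT (fun z : T * T => K n z.1 z.2)) ->
  (forall n x y, ((`|K n x y|)%:E <= C%:E * kn G mu2 (K n))%E) ->
  (forall n, finite_meas_partition (N n) (X n)) ->
  ((fun n : nat => (\big[Num.max/0]_(m < N n) fine (G (X n m)))%:E
        * kn G mu2 (K n) * (n%:R^-1)%:E)%E @ \oo --> 0%E) ->
  ((fun n : nat =>
      ((fine (kn G mu2 (K n)) `^ (q / 2))^-1
        * ((\big[Num.max/0]_(m < N n) fine (G (X n m))) / n%:R) `^ (q / 2 - 1))%:E
      * \sum_(m < N n)
          \int[(G \x G)%E]_(z in X n m `*` X n m)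
             ((`|K n z.1 z.2| `^ q) * muq z.1 * muq z.2)%:E)%E
     @ \oo --> 0%E).
Proof.
move=> q2 mmu2 mu20 [c [c0 cmu2]] mmuq muq0 [M Mmuq] mK KC XP hyp.
have p0 : 0 < q / 2 - 1 by lra.
pose gm n := \big[Num.max/0]_(m < N n) fine (G (X n m)).
have gm0 n : 0 <= gm n.
  rewrite /gm; elim/big_ind: _ => //.
  - by move=> x y x0 y0; rewrite le_max x0.
  - by move=> i _; apply: fine_ge0; apply: measure_ge0.
have kn0 n : (0 <= kn G mu2 (K n))%E.
  apply: integral_ge0 => z _; rewrite lee_fin.
  by apply: mulr_ge0; [apply: mulr_ge0|]; rewrite ?sqr_ge0.
pose w n := gm n / n%:R * fine (kn G mu2 (K n)).
have w0 n : 0 <= w n.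
  by rewrite /w; apply: mulr_ge0; [apply: divr_ge0|apply: fine_ge0].
have hw : w @ \oo --> 0.
  have : (fun n => (w n)%:E) @ \oo --> 0%E.
    apply: (squeeze_cvge (f := cst 0%E)
      (h := fun n : nat => ((gm n)%:E * kn G mu2 (K n) * (n%:R^-1)%:E)%E)); last first.
    - exact: hyp.
    - exact: cvg_cst.
    apply: nearW => n; rewrite /cst lee_fin w0 /=.
    move: (kn0 n); rewrite /w; case: (kn G mu2 (K n)) => [k| |] //= k0.
    - by rewrite -!EFinM mulrAC.
    - rewrite mulr0; apply: mule_ge0; [apply: mule_ge0|]; rewrite ?lee_fin ?invr_ge0 //.
  by move/fine_cvgP => [_].
pose B := `|C| `^ (q - 2) * (M / c) ^+ 2.
have B0 : 0 <= B by rewrite /B mulr_ge0 ?powR_ge0 ?sqr_ge0.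
apply: (squeeze_cvge (f := cst 0%E) (h := fun n => (B * w n `^ (q / 2 - 1))%:E)); last first.
- apply: cvg_EFin; first exact: nearW.
  have := cvgM (cvg_cst B) (@powR_seq_cvg0 _ _ _ p0 w0 hw); rewrite mulr0.
  exact.
- exact: cvg_cst.
apply: nearW => n; rewrite /cst.
set S := (\sum_(m < N n) _)%E.
have S0 : (0 <= S)%E.
  apply: sume_ge0 => m _; apply: integral_ge0 => z _; rewrite lee_fin.
  by apply: mulr_ge0; [apply: mulr_ge0|]; rewrite ?powR_ge0.
have RHS0 : (0 <= (B * w n `^ (q / 2 - 1))%:E)%E by rewrite lee_fin mulr_ge0 ?powR_ge0.
have q20 : q / 2 != 0 by apply: lt0r_neq0; lra.
move: (KC n); rewrite /w.
have := kn0 n; case E: (kn G mu2 (K n)) => [k| |] //= k0 KCn; last first.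
  by rewrite powR0 // invr0 mul0r mul0e lexx /= lee_fin mulr_ge0 ?powR_ge0.
rewrite lee_fin in k0.
have [k00|kpos] : k = 0 \/ 0 < k.
  by move: k0; rewrite le_eqVlt => /orP[/eqP ->|->]; [left|right].
  by rewrite k00 powR0 // invr0 mul0r mul0e lexx /= lee_fin mulr_ge0 ?powR_ge0.
pose D := (`|C| * k) `^ (q - 2) * (M / c) ^+ 2.
have D0 : 0 <= D by rewrite /D mulr_ge0 ?powR_ge0 ?sqr_ge0.
pose h (z : T * T) := (D * (K n z.1 z.2 ^+ 2 * mu2 z.1 * mu2 z.2))%:E.
have mg : measurable_fun setT (fun z : T * T => K n z.1 z.2 ^+ 2 * mu2 z.1 * mu2 z.2).
  apply: measurable_funM; first apply: measurable_funM.
  - exact: measurable_funX.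
  - exact: measurableT_comp mmu2 measurable_fst.
  - exact: measurableT_comp mmu2 measurable_snd.
have mh : measurable_fun setT h.
  by apply/measurable_EFinP; apply: measurable_funM => //; exact: measurable_cst.
have h0 : forall z, (0 <= h z)%E.
  move=> z; rewrite lee_fin; apply: mulr_ge0 => //.
  by apply: mulr_ge0; [apply: mulr_ge0|]; rewrite ?sqr_ge0.
have mf : measurable_fun setT
    (fun z : T * T => (`|K n z.1 z.2| `^ q * muq z.1 * muq z.2)%:E).
  apply/measurable_EFinP; apply: measurable_funM; first apply: measurable_funM.
  - apply: (measurableT_comp (@measurable_powR R q)).
    apply: (measurableT_comp (@normr_measurable R setT)).
    exact: mK.
  - exact: measurableT_comp mmuq measurable_fst.
  - exact: measurableT_comp mmuq measurable_snd.
have mXX : forall m, (m < N n)%N -> measurable (X n m `*` X n m).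
  by move=> m mN; apply: measurableX; apply: (XP n).1.
have hS : (S <= (D * k)%:E)%E.
  apply: (@le_trans _ _ (\sum_(m < N n) \int[(G \x G)%E]_(z in X n m `*` X n m) h z)%E).
    apply: lee_sum => m _; apply: ge0_le_integral.
    - exact: mXX.
    - by move=> z _; rewrite lee_fin; apply: mulr_ge0; [apply: mulr_ge0|]; rewrite ?powR_ge0.
    - exact: measurable_funS mf.
    - exact: measurable_funS mh.
    - move=> z _; rewrite lee_fin /D; apply: pt_bound => //.
      by have := KCn z.1 z.2; rewrite -EFinM lee_fin.
  have dXX : forall m m', (m < N n)%N -> (m' < N n)%N -> m <> m' ->
      X n m `*` X n m `&` X n m' `*` X n m' = set0.
    move=> m m' mN m'N mm'; rewrite -setXI ((XP n).2.1 _ _ mN m'N mm').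
    by rewrite set0X.
  apply: (le_trans (@sum_part_le _ _ _ (G \x G)%E (N n)
     (fun m => X n m `*` X n m) h mXX dXX mh h0)).
  rewrite /h; under eq_integral => z _ do rewrite EFinM.
  rewrite ge0_integralZl_EFin //.
  - by rewrite -[X in (_ * X)%E]/(kn G mu2 (K n)) E -EFinM.
  - by move=> z _; rewrite lee_fin; apply: mulr_ge0; [apply: mulr_ge0|]; rewrite ?sqr_ge0.
  - by apply/measurable_EFinP.
have coef0 : 0 <= (k `^ (q / 2))^-1 * (gm n / n%:R) `^ (q / 2 - 1).
  by rewrite mulr_ge0 ?invr_ge0 ?powR_ge0.
apply/andP; split; first by apply: mule_ge0; rewrite // lee_fin.
apply: (le_trans (lee_wpmul2l _ hS)); first by rewrite lee_fin.
rewrite -EFinM lee_fin /D alg_id //.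
by apply: divr_ge0; [exact: gm0|exact: ler0n].
Qed.
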